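(* Let $L=\{0,1,\dots,m\}^n$ ordered componentwise with bottom $\bot=(0,\dots,0)$, and let $f_1,\dots,f_n:L\to L$ be monotone, inflationary, and such that each $f_i$ is $i$-local. Fix integers $T\ge 0$ and $\tau\ge 1$. Consider an execution $G_0=\bot,G_1,G_2,\dots$ in which at each round $t$ a scheduler chooses $S_t\subseteq\{1,\dots,n\}$, and for each $i\in S_t$ process $i$ uses a view $\widehat G^{(i)}_t\in L$ satisfying bounded staleness with parameter $T$; the next state is given coordinatewise by $G_{t+1}[i]=f_i(\widehat G^{(i)}_t)[i]$ for $i\in S_t$ and $G_{t+1}[j]=G_t[j]$ for $j\notin S_t$. Assume the scheduler is strongly fair with parameter $\tau$. Then there exists $U$ with $G_t=G^*$ for all $t\ge U$, and $G^*$ is the least common fixed point of $\{f_1,\dots,f_n\}$.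
   Context: A function $f_i:L\to L$ is $i$-local if $f_i(G)[j]=G[j]$ for all $G\in L$ and all $j\neq i$. Bounded staleness with parameter $T$: for every round $t$ and $i\in S_t$, $\widehat G^{(i)}_t[i]=G_t[i]$, and for each $j\neq i$, $\widehat G^{(i)}_t[j]=G_s[j]$ for some round $s$ with $\max(0,t-T)\le s\le t$. Strong fairness with parameter $\tau$: every index $i$ belongs to $S_t$ for at least one $t$ in every window of $\tau$ consecutive rounds. A function is inflationary if $f(G)\ge G$ for all $G$, monotone if $G\le H\Rightarrow f(G)\le f(H)$. The least common fixed point is the least $G\in L$ with $f_i(G)=G$ for all $i$. *)

(* Defs.v *)
From mathcomp Require Import all_boot.
Set Implicit Arguments. Unset Strict Implicit. Unset Printing Implicit Defensive.

(* The lattice L = {0,...,m}^n; coordinates indexed by 'I_n (0-based version of 1..n). *)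
Definition lat (n m : nat) := {ffun 'I_n -> 'I_m.+1}.

Definition lat_le (n m : nat) (G H : lat n m) : Prop :=
  forall i : 'I_n, (nat_of_ord (G i) <= nat_of_ord (H i))%N.

Definition lat_bot (n m : nat) : lat n m := [ffun _ => ord0].

Definition monotone_fun (n m : nat) (f : lat n m -> lat n m) : Prop :=
  forall G H, lat_le G H -> lat_le (f G) (f H).

Definition inflationary (n m : nat) (f : lat n m -> lat n m) : Prop :=
  forall G, lat_le G (f G).

Definition local (n m : nat) (i : 'I_n) (f : lat n m -> lat n m) : Prop :=
  forall G (j : 'I_n), j != i -> f G j = G j.

Definition least_common_fixed_point (n m : nat) (f : 'I_n -> lat n m -> lat n m)
  (G : lat n m) : Prop :=
  (forall i, f i G = G) /\ (forall H, (forall i, f i H = H) -> lat_le G H).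

(* Bounded staleness with parameter T (t - T is truncated, i.e. max(0, t-T)). *)
Definition bounded_staleness (n m : nat) (T : nat) (G : nat -> lat n m)
  (S : nat -> {set 'I_n}) (view : nat -> 'I_n -> lat n m) : Prop :=
  forall t (i : 'I_n), i \in S t ->
    view t i i = G t i /\
    forall j : 'I_n, j != i ->
      exists s, (t - T <= s)%N /\ (s <= t)%N /\ view t i j = G s j.

Definition strongly_fair (n : nat) (tau : nat) (S : nat -> {set 'I_n}) : Prop :=
  forall (i : 'I_n) (t0 : nat), exists t, (t0 <= t)%N /\ (t < t0 + tau)%N /\ i \in S t.

Definition execution_step (n m : nat) (f : 'I_n -> lat n m -> lat n m)
  (G : nat -> lat n m) (S : nat -> {set 'I_n}) (view : nat -> 'I_n -> lat n m) : Prop :=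
  forall t (i : 'I_n),
    G t.+1 i = if i \in S t then f i (view t i) i else G t i.

(* Main.v *)
From Stdlib Require Import Classical.
Require Import Defs.
From mathcomp Require Import all_boot.
From mathcomp Require Import zify.

Lemma mono_chain (p : nat -> nat) : (forall t, p t <= p t.+1) ->
  forall s t, s <= t -> p s <= p t.
Proof.
move=> hp s t; elim: t => [|t IH]; first by rewrite leqn0 => /eqP->.
rewrite leq_eqVlt => /orP[/eqP->//|]; rewrite ltnS => /IH h.
exact: leq_trans h (hp t).
Qed.

Lemma stab (B : nat) : forall k (p : nat -> nat), B - p 0 <= k ->
  (forall t, p t <= p t.+1) -> (forall t, p t <= B) ->
  exists U, forall t, U <= t -> p t = p U.
Proof.
elim=> [|k IH] p hk hm hB.
  exists 0 => t _; have := hB t; have := @mono_chain p hm 0 t (leq0n t); lia.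
case: (classic (exists t, p 0 < p t)) => [[t0 ht0]|hno].
  have h1 : B - p (0 + t0) <= k by have := hB t0; rewrite add0n; lia.
  have h2 : forall t, p (t + t0) <= p (t.+1 + t0) by move=> t; rewrite addSn.
  have [U HU] := IH (fun t => p (t + t0)) h1 h2 (fun t => hB _).
  exists (U + t0) => t ht.
  have := HU (t - t0); rewrite subnK; last lia.
  by move=> ->; [|lia].
exists 0 => t _.
have := @mono_chain p hm 0 t (leq0n t).
have : ~ (p 0 < p t) by move=> h; apply: hno; exists t.
lia.
Qed.

Lemma sum_eq (n : nat) (a b : 'I_n -> nat) : (forall i, a i <= b i) ->
  \sum_i b i <= \sum_i a i -> forall i, a i = b i.
Proof.
move=> hab hs j; apply/eqP; rewrite eqn_leq hab /=.
rewrite leqNgt; apply/negP => hj.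
move: hs; rewrite (bigD1 j) //= [X in _ <= X](bigD1 j) //=.
have : \sum_(i | i != j) a i <= \sum_(i | i != j) b i by apply: leq_sum.
move=> h1 h2; have := leq_trans (leq_add hj h1) h2; by rewrite addSn ltnn.
Qed.

Theorem theorem4 (n m : nat) (f : 'I_n -> lat n m -> lat n m)
  (T tau : nat) (G : nat -> lat n m) (S : nat -> {set 'I_n})
  (view : nat -> 'I_n -> lat n m) :
  (forall i, monotone_fun (f i)) ->
  (forall i, inflationary (f i)) ->
  (forall i, local i (f i)) ->
  (1 <= tau)%N ->
  G 0 = lat_bot n m ->
  bounded_staleness T G S view ->
  execution_step f G S view ->
  strongly_fair tau S ->
  exists (U : nat) (Gstar : lat n m),
    (forall t, (U <= t)%N -> G t = Gstar) /\ least_common_fixed_point f Gstar.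
Proof.
move=> hmon hinf hloc htau hG0 hst hex hfair.
have step : forall t, lat_le (G t) (G t.+1).
  move=> t i; rewrite hex; case: ifP => // hi.
  have [hv _] := hst t i hi; rewrite -hv; exact: hinf.
have chain : forall i s t, s <= t -> G s i <= G t i.
  move=> i; apply: mono_chain => t; exact: step.
pose p t := \sum_i (nat_of_ord (G t i)).
have [U HU] : exists U, forall t, U <= t -> p t = p U.
  apply: (@stab (\sum_(i : 'I_n) m) (\sum_(i : 'I_n) m - p 0)) => //.
  - move=> t; apply: leq_sum => i _; exact: step.
  - move=> t; apply: leq_sum => i _; by rewrite -ltnS.
have HG : forall t, U <= t -> G t = G U.
  move=> t ht; apply/ffunP => i; apply/val_inj => /=; symmetry.
  apply: (@sum_eq n (fun i => nat_of_ord (G U i)) (fun i => nat_of_ord (G t i))).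
  - by move=> k; apply: chain.
  - by rewrite -/(p t) -/(p U) HU.
have safe : forall H, (forall i, f i H = H) -> forall t s, s <= t -> lat_le (G s) H.
  move=> H hH; elim=> [|t IH] s hs.
    move: hs; rewrite leqn0 => /eqP-> i; rewrite hG0 ffunE //.
  move: hs; rewrite leq_eqVlt => /orP[/eqP->|]; last by rewrite ltnS; apply: IH.
  move=> i; rewrite hex; case: ifP => hi; last by apply: IH.
  have <- : f i H i = H i by rewrite hH.
  apply: hmon.
  have [hv hj] := hst t i hi.
  move=> j; case: (eqVneq j i) => [->|hji]; first by rewrite hv; apply: IH.
  have [s' [_ [hs' ->]]] := hj j hji; exact: IH.
exists U, (G U); split; first exact: HG.
split; last by move=> H hH; apply: (safe H hH U).
move=> i; apply/ffunP => j0.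
case: (eqVneq j0 i) => [->|hji0]; last by apply: hloc.
have [t [ht1 [_ hti]]] := hfair i (U + T).
have hv : view t i = G U.
  apply/ffunP => j; have [hvi hj] := hst t i hti.
  case: (eqVneq j i) => [->|hji]; first by rewrite hvi HG //; lia.
  have [s' [hs1 [_ ->]]] := hj j hji; rewrite HG //; lia.
have := hex t i; rewrite hti hv (HG t.+1); last lia.
by move=> <-.
Qed.
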